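(* Let $a,b\in C\ell_2$. Then (1) $L(a)L(a^+)L(a)=L(a)$, $L(a^+)L(a)L(a^+)=L(a^+)$, $L(a)L(a^+)=(L(a)L(a^+))^T$, $L(a^+)L(a)=(L(a^+)L(a))^T$; (2) $R(a)R(a^+)R(a)=R(a)$, $R(a^+)R(a)R(a^+)=R(a^+)$, $R(a)R(a^+)=(R(a)R(a^+))^T$, $R(a^+)R(a)=(R(a^+)R(a))^T$; (3) $(L(a)R(b))^+=L(a^+)R(b^+)$, where the left side is the Moore–Penrose inverse of the real matrix $L(a)R(b)$.
   Context: $C\ell_2$ is the 4-dimensional real associative algebra with basis $1,e_1,e_2,e_3$ and multiplication $e_1^2=e_2^2=1$, $e_3^2=-1$, $e_1e_2=e_3=-e_2e_1$, $e_1e_3=e_2=-e_3e_1$, $e_3e_2=e_1=-e_2e_3$. For $a=a_0+a_1e_1+a_2e_2+a_3e_3$ ($a_i\in\mathbb{R}$): $\bar a=a_0-a_1e_1-a_2e_2-a_3e_3$, $a'=a_0+a_1e_1+a_2e_2-a_3e_3$, $H_a=a_0^2-a_1^2-a_2^2+a_3^2$, $$L(a)=\begin{pmatrix} a_0&a_1&a_2&-a_3\\ a_1&a_0&a_3&-a_2\\ a_2&-a_3&a_0&a_1\\ a_3&-a_2&a_1&a_0\end{pmatrix},\qquad R(a)=\begin{pmatrix} a_0&a_1&a_2&-a_3\\ a_1&a_0&-a_3&a_2\\ a_2&a_3&a_0&-a_1\\ a_3&a_2&-a_1&a_0\end{pmatrix}$$ (matrices of $x\mapsto ax$ and $x\mapsto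 xa$ in coordinates $(x_0,x_1,x_2,x_3)^T$). The element $a^+$ is defined by $a^+=0$ if $a=0$, $a^+=\bar a/H_a$ if $H_a\neq0$, and $a^+=a'/(4(a_0^2+a_3^2))$ if $H_a=0$, $a\neq 0$. The Moore–Penrose inverse $A^+$ of a real matrix $A$ is the unique $X$ with $AXA=A$, $XAX=X$, $(AX)^T=AX$, $(XA)^T=XA$. *)

(* Defs.v *)
From HB Require Import structures.
From mathcomp Require Import all_boot all_order all_algebra.
Set Implicit Arguments. Unset Strict Implicit. Unset Printing Implicit Defensive.
Import Order.TTheory GRing.Theory Num.Theory.
Local Open Scope ring_scope.

(* Elements of Cl_2 = a0 + a1 e1 + a2 e2 + a3 e3 with real coordinates. *)
Record cl2 (R : Type) := Cl2 { c0 : R; c1 : R; c2 : R; c3 : R }.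

Section Cl2Defs.
Variable R : realFieldType.

Definition cl2_zero : cl2 R := Cl2 0 0 0 0.

Definition cl2_bar (a : cl2 R) : cl2 R := Cl2 (c0 a) (- c1 a) (- c2 a) (- c3 a).
Definition cl2_prime (a : cl2 R) : cl2 R := Cl2 (c0 a) (c1 a) (c2 a) (- c3 a).
Definition cl2_scale (k : R) (a : cl2 R) : cl2 R :=
  Cl2 (k * c0 a) (k * c1 a) (k * c2 a) (k * c3 a).
Definition cl2_H (a : cl2 R) : R :=
  c0 a ^+ 2 - c1 a ^+ 2 - c2 a ^+ 2 + c3 a ^+ 2.

Definition cl2_plus (a : cl2 R) : cl2 R :=
  if (c0 a == 0) && (c1 a == 0) && (c2 a == 0) && (c3 a == 0) then cl2_zero
  else if cl2_H a != 0 then cl2_scale (cl2_H a)^-1 (cl2_bar a)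
  else cl2_scale (4 * (c0 a ^+ 2 + c3 a ^+ 2))^-1 (cl2_prime a).

Definition mx4 (rows : seq (seq R)) : 'M[R]_4 :=
  \matrix_(i < 4, j < 4) nth 0 (nth [::] rows i) j.

(* L(a): matrix of x |-> a x *)
Definition Lmx (a : cl2 R) : 'M[R]_4 :=
  let a0 := c0 a in let a1 := c1 a in let a2 := c2 a in let a3 := c3 a in
  mx4 [:: [:: a0; a1; a2; - a3];
          [:: a1; a0; a3; - a2];
          [:: a2; - a3; a0; a1];
          [:: a3; - a2; a1; a0]].

(* R(a): matrix of x |-> x a *)
Definition Rmx (a : cl2 R) : 'M[R]_4 :=
  let a0 := c0 a in let a1 := c1 a in let a2 := c2 a in let a3 := c3 a in
  mx4 [:: [:: a0; a1; a2; - a3];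
          [:: a1; a0; - a3; a2];
          [:: a2; a3; a0; - a1];
          [:: a3; a2; - a1; a0]].

Definition is_MP_inverse (A X : 'M[R]_4) : Prop :=
  [/\ A *m X *m A = A, X *m A *m X = X,
      (A *m X)^T = A *m X & (X *m A)^T = X *m A].

End Cl2Defs.

(* Main.v *)
Require Import Defs.
From HB Require Import structures.
From mathcomp Require Import all_boot all_order all_algebra.
From mathcomp Require Import ring lra.
Import Order.TTheory GRing.Theory Num.Theory.
Local Open Scope ring_scope.


Section Aux.
Variable R : realFieldType.
Implicit Types x y z : cl2 R.

Definition cmul x y : cl2 R :=
  Cl2 (c0 x * c0 y + c1 x * c1 y + c2 x * c2 y - c3 x * c3 y)
      (c0 x * c1 y + c1 x * c0 y - c2 x * c3 y + c3 x * c2 y)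
      (c0 x * c2 y + c2 x * c0 y + c1 x * c3 y - c3 x * c1 y)
      (c0 x * c3 y + c3 x * c0 y + c1 x * c2 y - c2 x * c1 y).

Lemma cl2_ext x y : c0 x = c0 y -> c1 x = c1 y -> c2 x = c2 y -> c3 x = c3 y -> x = y.
Proof. by case: x => ????; case: y => ???? /= -> -> -> ->. Qed.

Ltac mxsolve := apply/matrixP => [[[|[|[|[|?]]]] ?] [[|[|[|[|?]]]] ?]] //;
  rewrite !mxE ?big_ord_recl ?big_ord0 ?mxE /=; ring.

Lemma LmxM x y : Lmx x *m Lmx y = Lmx (cmul x y).
Proof. mxsolve. Qed.

Lemma RmxM x y : Rmx x *m Rmx y = Rmx (cmul y x).
Proof. mxsolve. Qed.

Lemma LRC x y : Lmx x *m Rmx y = Rmx y *m Lmx x.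
Proof. mxsolve. Qed.

Lemma Lmx_sym x : c3 x = 0 -> (Lmx x)^T = Lmx x.
Proof. case: x => ? ? ? ? /= ->; mxsolve. Qed.

Lemma Rmx_sym x : c3 x = 0 -> (Rmx x)^T = Rmx x.
Proof. case: x => ? ? ? ? /= ->; mxsolve. Qed.

Lemma cmulA x y z : cmul (cmul x y) z = cmul x (cmul y z).
Proof. apply: cl2_ext => /=; ring. Qed.

Definition cs x := c0 x ^+ 2 + c3 x ^+ 2.

Lemma cmul_prime x : cmul (cmul x (cl2_prime x)) x =
  Cl2 (4 * cs x * c0 x - 3 * cl2_H x * c0 x) (4 * cs x * c1 x - cl2_H x * c1 x)
      (4 * cs x * c2 x - cl2_H x * c2 x) (4 * cs x * c3 x - 3 * cl2_H x * c3 x).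
Proof. apply: cl2_ext; rewrite /= /cs /cl2_H; ring. Qed.

Lemma c3_prime x : c3 (cmul x (cl2_prime x)) = 0.
Proof. rewrite /=; ring. Qed.

Lemma c3_scale k x : c3 (cl2_scale k x) = k * c3 x.
Proof. by []. Qed.

Lemma scale_cmull k x y : cmul (cl2_scale k x) y = cl2_scale k (cmul x y).
Proof. apply: cl2_ext => /=; ring. Qed.
Lemma scale_cmulr k x y : cmul x (cl2_scale k y) = cl2_scale k (cmul x y).
Proof. apply: cl2_ext => /=; ring. Qed.
Lemma primeK x : cl2_prime (cl2_prime x) = x.
Proof. apply: cl2_ext => /=; ring. Qed.
Lemma H_prime x : cl2_H (cl2_prime x) = cl2_H x.
Proof. rewrite /cl2_H /=; ring. Qed.
Lemma cs_prime x : cs (cl2_prime x) = cs x.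
Proof. rewrite /cs /=; ring. Qed.

Lemma key x : let p := cl2_plus x in
  [/\ cmul (cmul x p) x = x, cmul (cmul p x) p = p,
      c3 (cmul x p) = 0 & c3 (cmul p x) = 0].
Proof.
rewrite /cl2_plus.
case: ifP => [|Hnz].
  case: x => a0 a1 a2 a3 /=.
  move=> /andP[/andP[/andP[/eqP-> /eqP->] /eqP->] /eqP->].
  by split; try apply: cl2_ext => /=; ring.
case: ifP => [HH'|/negbT/negbNE/eqP HH].
  case: x Hnz HH' => a0 a1 a2 a3 /= _; rewrite /cl2_H /= => HH'.
  split; try apply: cl2_ext => /=.
  all: try (field; exact HH').
have Hs1 : cs x != 0.
  rewrite /cs; apply/negP => /eqP Hs0.
  move: Hnz HH; rewrite /cl2_H.
  have h0 : c0 x = 0 by apply/eqP; rewrite -sqrf_eq0; apply/eqP; nra.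
  have h3 : c3 x = 0 by apply/eqP; rewrite -sqrf_eq0; apply/eqP; nra.
  rewrite h0 h3 => Hn HH.
  have h1 : c1 x = 0 by apply/eqP; rewrite -sqrf_eq0; apply/eqP; nra.
  have h2 : c2 x = 0 by apply/eqP; rewrite -sqrf_eq0; apply/eqP; nra.
  by rewrite h1 h2 eqxx in Hn.
have Hs : 4 * cs x != 0 by rewrite mulf_neq0 // pnatr_eq0.
set k := (4 * _)^-1.
have hk : k * (4 * cs x) = 1 by rewrite mulVf.
rewrite !(scale_cmull, scale_cmulr) cmul_prime.
have -> : cmul (cmul (cl2_prime x) x) (cl2_prime x) =
          cmul (cmul (cl2_prime x) (cl2_prime (cl2_prime x))) (cl2_prime x) by rewrite primeK.
rewrite cmul_prime H_prime cs_prime HH.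
have -> : cmul (cl2_prime x) x = cmul (cl2_prime x) (cl2_prime (cl2_prime x)) by rewrite primeK.
rewrite !c3_scale !c3_prime.
rewrite /k; move: Hs; rewrite /cs; clear k hk; case: x {Hnz HH Hs1} => a0 a1 a2 a3 /= Hs.
move: Hs; set t := 4 * _ => Hs; clearbody t.
split; try apply: cl2_ext => /=; try (field; exact: Hs); try ring.
Qed.

Lemma MP_unique (A X Y : 'M[R]_4) : is_MP_inverse A X -> is_MP_inverse A Y -> X = Y.
Proof.
case=> [h1 h2 h3 h4] [k1 k2 k3 k4].
have t1 : A^T = A^T *m (A *m Y)^T by rewrite -trmx_mul k1.
have t2 : (A *m X)^T = A *m X *m (A *m Y).
  by rewrite trmx_mul [in LHS]t1 [in LHS]mulmxA -(trmx_mul A X) h3 k3.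
have eX : X = X *m A *m Y.
  by rewrite -{1}h2 -mulmxA -h3 t2 !mulmxA h2.
have t1' : A^T = (X *m A)^T *m A^T by rewrite -trmx_mul mulmxA h1.
have t2' : (Y *m A)^T = X *m A *m (Y *m A).
  by rewrite trmx_mul [in LHS]t1' -[in LHS]mulmxA -(trmx_mul Y A) h4 k4.
have eY : Y = X *m A *m Y.
  by rewrite -{1}k2 -k4 t2' -mulmxA k2.
by rewrite eY.
Qed.

Lemma mainL x :
  [/\ Lmx x *m Lmx (cl2_plus x) *m Lmx x = Lmx x, Lmx (cl2_plus x) *m Lmx x *m Lmx (cl2_plus x) = Lmx (cl2_plus x),
      Lmx x *m Lmx (cl2_plus x) = (Lmx x *m Lmx (cl2_plus x))^T & Lmx (cl2_plus x) *m Lmx x = (Lmx (cl2_plus x) *m Lmx x)^T].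
Proof.
have [e1 e2 e3 e4] := key x.
by rewrite !LmxM e1 e2 !Lmx_sym.
Qed.

Lemma mainR x :
  [/\ Rmx x *m Rmx (cl2_plus x) *m Rmx x = Rmx x, Rmx (cl2_plus x) *m Rmx x *m Rmx (cl2_plus x) = Rmx (cl2_plus x),
      Rmx x *m Rmx (cl2_plus x) = (Rmx x *m Rmx (cl2_plus x))^T & Rmx (cl2_plus x) *m Rmx x = (Rmx (cl2_plus x) *m Rmx x)^T].
Proof.
have [e1 e2 e3 e4] := key x.
by rewrite !RmxM -!cmulA e1 e2 !Rmx_sym.
Qed.


End Aux.
Arguments cmul {R}.


Theorem proposition4p1 (R : realFieldType) (a b : cl2 R) :
  [/\ Lmx a *m Lmx (cl2_plus a) *m Lmx a = Lmx a,
      Lmx (cl2_plus a) *m Lmx a *m Lmx (cl2_plus a) = Lmx (cl2_plus a),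
      Lmx a *m Lmx (cl2_plus a) = (Lmx a *m Lmx (cl2_plus a))^T
    & Lmx (cl2_plus a) *m Lmx a = (Lmx (cl2_plus a) *m Lmx a)^T] /\
  [/\ Rmx a *m Rmx (cl2_plus a) *m Rmx a = Rmx a,
      Rmx (cl2_plus a) *m Rmx a *m Rmx (cl2_plus a) = Rmx (cl2_plus a),
      Rmx a *m Rmx (cl2_plus a) = (Rmx a *m Rmx (cl2_plus a))^T
    & Rmx (cl2_plus a) *m Rmx a = (Rmx (cl2_plus a) *m Rmx a)^T] /\
  (forall X : 'M[R]_4,
     is_MP_inverse (Lmx a *m Rmx b) X <-> X = Lmx (cl2_plus a) *m Rmx (cl2_plus b)).
Proof.
have [l1 l2 l3 l4] := mainL _ a.
have [r1 r2 r3 r4] := mainR _ b.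
split; first by split.
split; first by case: (mainR _ a).
have [a1 a2 a3 a4] := key _ a.
have [b1 b2 b3 b4] := key _ b.
have LRM : forall x y u v : cl2 R, (Lmx x *m Rmx u) *m (Lmx y *m Rmx v) =
    Lmx (cmul x y) *m Rmx (cmul v u).
  move=> x y u v; rewrite !mulmxA -(mulmxA (Lmx x) (Rmx u) (Lmx y)) -(LRC _ y u).
  by rewrite (mulmxA (Lmx x)) LmxM -mulmxA RmxM.
have LRT : forall x y : cl2 R, c3 x = 0 -> c3 y = 0 -> (Lmx x *m Rmx y)^T = Lmx x *m Rmx y.
  by move=> x y hx hy; rewrite trmx_mul Lmx_sym // Rmx_sym // LRC.
have MP : is_MP_inverse (Lmx a *m Rmx b) (Lmx (cl2_plus a) *m Rmx (cl2_plus b)).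
  split.
  - by rewrite !LRM -cmulA a1 b1.
  - by rewrite !LRM -cmulA a2 b2.
  - by rewrite !LRM LRT.
  - by rewrite !LRM LRT.
by move=> X; split => [h|->] //; apply: MP_unique h MP.
Qed.
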